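(* Let $0<A<B$, let $z\in \mathbb{C}\setminus\{0\}$ and $Y>0$. Then $$\int_{-\pi}^{\pi} \int_{A}^{B} \min\left\{\|\Im(zRe^{\theta i})\|^{-1}, Y\right\}^{1/2} \cdot \min\left\{\|\Re(zRe^{\theta i})\|^{-1}, Y\right\}^{1/2} \, dR \, d\theta \ll_{A,B} \max\{1,|z|^{-1}\}\log (2+Y),$$ where the implied constant depends only on $A$ and $B$.
   Context: For $x\in\mathbb{R}$, $\|x\|$ denotes the distance from $x$ to the nearest integer (with $\|x\|^{-1}=\infty$ if $x\in\mathbb{Z}$, so the minimum is then $Y$). *)

(* Defs.v *)
From Stdlib Require Import Reals.
From Coquelicot Require Import Coquelicot.
Open Scope R_scope.

Definition dist_int (x : R) : R := Rmin (frac_part x) (1 - frac_part x).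

(* min{ ||x||^{-1}, Y }, with the convention ||x||^{-1} = +oo when x is an integer. *)
Definition capinv (x Y : R) : R :=
  if Req_EM_T (dist_int x) 0 then Y else Rmin (/ dist_int x) Y.

Definition cexpi (t : R) : C := (cos t, sin t).

Definition integrand (z : C) (Y t r : R) : R :=
  let w := Cmult z (Cmult (RtoC r) (cexpi t)) in
  sqrt (capinv (Im w) Y) * sqrt (capinv (Re w) Y).

(* Main.v *)
Require Import Defs.
From Stdlib Require Import Reals.
From Coquelicot Require Import Coquelicot.
From Stdlib Require Import Lra Lia Psatz ZArith.
Open Scope R_scope.

Lemma dist_int_ex (x : R) : exists n : Z, dist_int x = Rabs (x - IZR n).
Proof.
  unfold dist_int, frac_part. destruct (base_Int_part x) as [H1 H2].
  set (m := Int_part x) in *.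
  unfold Rmin. destruct (Rle_dec (x - IZR m) (1 - (x - IZR m))).
  - exists m. rewrite Rabs_right; lra.
  - exists (m + 1)%Z. rewrite plus_IZR. rewrite Rabs_left; lra.
Qed.

Lemma dist_int_le (x : R) (n : Z) : dist_int x <= Rabs (x - IZR n).
Proof.
  unfold dist_int, frac_part. destruct (base_Int_part x) as [H1 H2].
  set (m := Int_part x) in *.
  destruct (Z_le_gt_dec n m) as [Hn|Hn].
  - apply IZR_le in Hn. apply Rle_trans with (x - IZR m); [apply Rmin_l|].
    rewrite Rabs_right; lra.
  - assert (Hn' : (m + 1 <= n)%Z) by lia. apply IZR_le in Hn'. rewrite plus_IZR in Hn'.
    apply Rle_trans with (1 - (x - IZR m)); [apply Rmin_r|].
    rewrite Rabs_left; lra.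
Qed.

Lemma dist_int_nonneg (x : R) : 0 <= dist_int x.
Proof. destruct (dist_int_ex x) as [n ->]. apply Rabs_pos. Qed.

Lemma dist_int_half (x : R) : dist_int x <= 1/2.
Proof.
  unfold dist_int. apply Rle_trans with ((frac_part x + (1 - frac_part x))/2).
  - unfold Rmin. destruct (Rle_dec _ _); lra.
  - lra.
Qed.

Lemma dist_int_lip (x y : R) : dist_int x <= dist_int y + Rabs (x - y).
Proof.
  destruct (dist_int_ex y) as [n Hn]. rewrite Hn.
  apply Rle_trans with (Rabs (x - IZR n)); [apply dist_int_le|].
  replace (x - IZR n) with ((x - y) + (y - IZR n)) by ring.
  rewrite Rplus_comm. apply Rabs_triang.
Qed.

Lemma dist_int_small (x : R) : Rabs x <= 1/2 -> dist_int x = Rabs x.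
Proof.
  intro H. apply Rle_antisym.
  - pose proof (dist_int_le x 0). rewrite Rminus_0_r in H0. exact H0.
  - destruct (dist_int_ex x) as [n Hn]. rewrite Hn.
    destruct (Z.eq_dec n 0) as [->|Hn0]; [rewrite Rminus_0_r; lra|].
    destruct (Z_le_gt_dec n 0) as [Hl|Hl].
    + assert (n <= -1)%Z by lia. apply IZR_le in H0.
      unfold Rabs in *; repeat destruct Rcase_abs; lra.
    + assert (1 <= n)%Z by lia. apply IZR_le in H0.
      unfold Rabs in *; repeat destruct Rcase_abs; lra.
Qed.

Lemma sin_shift_sq (x : R) (n : Z) : (sin (x + IZR n * PI))² = (sin x)².
Proof.
  rewrite sin_plus. assert (Hs : sin (IZR n * PI) = 0) by (apply sin_eq_0_1; eauto).
  rewrite Hs. assert (Hc : (cos (IZR n * PI))² = 1) by (rewrite cos2, Hs; unfold Rsqr; ring).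
  unfold Rsqr in *. nra.
Qed.

Lemma sin_sq_le (y : R) : 0 <= y <= PI/2 -> (sin y)² <= y².
Proof.
  intros Hy. pose proof PI_RGT_0. pose proof PI_4.
  assert (Hs : 0 <= sin y) by (apply sin_ge_0; lra).
  destruct (Req_dec y 0) as [->|Hy0]; [rewrite sin_0; unfold Rsqr; lra|].
  pose proof (sin_lt_x y ltac:(lra)). unfold Rsqr. apply Rmult_le_compat; lra.
Qed.

Lemma sin_dist (u : R) : (sin (PI * u))² <= (PI * dist_int u)².
Proof.
  destruct (dist_int_ex u) as [n Hn].
  pose proof (dist_int_half u). pose proof (dist_int_nonneg u).
  rewrite <- (sin_shift_sq (PI * u) (- n)). rewrite opp_IZR.
  replace (PI * u + - IZR n * PI) with (PI * (u - IZR n)) by ring.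
  pose proof PI_RGT_0.
  rewrite Hn in *. unfold Rabs in *. destruct Rcase_abs.
  - replace (PI * (u - IZR n)) with (- (PI * (- (u - IZR n)))) by ring.
    rewrite sin_neg. rewrite <- Rsqr_neg. apply sin_sq_le. split; nra.
  - apply sin_sq_le. split; nra.
Qed.

Definition hh (eps x : R) : R := / sqrt (x² + eps²).
Definition Ht (eps x : R) : R := ln (x + sqrt (x² + eps²)) - ln eps.

Lemma sq_pos (eps x : R) : 0 < eps -> 0 < x² + eps².
Proof. intro. unfold Rsqr. nra. Qed.

Lemma sqrt_gt_abs (eps x : R) : 0 < eps -> Rabs x < sqrt (x² + eps²).
Proof.
  intro He. rewrite <- sqrt_Rsqr_abs. apply sqrt_lt_1_alt. split; [apply Rle_0_sqr|].
  unfold Rsqr; nra.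
Qed.

Lemma Ht_arg_pos (eps x : R) : 0 < eps -> 0 < x + sqrt (x² + eps²).
Proof. intro He. pose proof (sqrt_gt_abs eps x He). unfold Rabs in H; destruct Rcase_abs; lra. Qed.

Lemma Ht_derive (eps x : R) : 0 < eps -> is_derive (Ht eps) x (hh eps x).
Proof.
  intro He. unfold Ht, hh. pose proof (sq_pos eps x He). pose proof (Ht_arg_pos eps x He).
  auto_derive.
  - split; [lra|]. split; [|exact I]. lra.
  - pose proof (sqrt_lt_R0 _ H). set (q := sqrt (x² + eps²)) in *.
    assert (Hq : q * q = x² + eps²) by (apply sqrt_sqrt; lra).
    unfold Rsqr in Hq. idtac.
    apply Rmult_eq_reg_r with (q * (x + q)); [|nra].
    field; lra.
Qed.

Lemma Ht_odd (eps x : R) : 0 < eps -> Ht eps (-x) = - Ht eps x.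
Proof.
  intro He. unfold Ht. pose proof (Ht_arg_pos eps x He). pose proof (Ht_arg_pos eps (-x) He).
  rewrite <- Rsqr_neg in *. set (q := sqrt (x² + eps²)) in *.
  assert (Hq : q * q = x² + eps²) by (apply sqrt_sqrt; pose proof (sq_pos eps x He); lra).
  assert (E : ln (- x + q) + ln (x + q) = ln eps + ln eps).
  { rewrite <- !ln_mult; try lra. f_equal. unfold Rsqr in Hq. nra. }
  lra.
Qed.

Lemma Ht_pos_bounds (eps x : R) : 0 < eps -> 0 <= x ->
  0 <= Ht eps x <= ln (1 + 2 * x / eps).
Proof.
  intros He Hx. unfold Ht. pose proof (Ht_arg_pos eps x He).
  pose proof (sq_pos eps x He).
  set (q := sqrt (x² + eps²)) in *.
  assert (Hq : q * q = x² + eps²) by (apply sqrt_sqrt; lra).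
  assert (Hq0 : 0 <= q) by apply sqrt_pos.
  unfold Rsqr in Hq.
  assert (Hqe : eps <= q) by nra.
  assert (Hqx : q <= x + eps) by nra.
  split.
  - assert (ln eps <= ln (x + q)) by (apply ln_le; lra). lra.
  - replace (1 + 2 * x / eps) with ((2 * x + eps) / eps) by (field; lra).
    rewrite ln_div; try lra. assert (ln (x + q) <= ln (2 * x + eps)) by (apply ln_le; lra). lra.
Qed.

Lemma ln_mono (a b : R) : 0 < a -> a <= b -> ln a <= ln b.
Proof. intros. apply ln_le; lra. Qed.

Lemma Ht_abs_le (eps rho x : R) : 0 < eps -> Rabs x <= rho ->
  Rabs (Ht eps x) <= ln (1 + 2 * rho / eps).
Proof.
  intros He Hx. assert (Hm : ln (1 + 2 * Rabs x / eps) <= ln (1 + 2 * rho / eps)).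
  { apply ln_mono. pose proof (Rabs_pos x). assert (0 <= Rabs x / eps) by (apply Rdiv_le_0_compat; lra). lra.
    assert (Rabs x / eps <= rho / eps) by (apply Rmult_le_compat_r; [apply Rlt_le, Rinv_0_lt_compat; lra| lra]).
    unfold Rdiv in *. lra. }
  destruct (Rcase_abs x).
  - rewrite (Rabs_left x) in Hm by lra.
    replace x with (- (-x)) by ring. rewrite Ht_odd; auto.
    destruct (Ht_pos_bounds eps (-x) He ltac:(lra)).
    rewrite Rabs_Ropp, Rabs_right; lra.
  - rewrite (Rabs_right x) in Hm by lra.
    destruct (Ht_pos_bounds eps x He ltac:(lra)). rewrite Rabs_right; lra.
Qed.

Lemma L_nonneg (eps rho : R) : 0 < eps -> 0 <= rho -> 0 <= ln (1 + 2 * rho / eps).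
Proof.
  intros. rewrite <- ln_1. apply ln_mono; [lra|].
  assert (0 <= rho / eps) by (apply Rdiv_le_0_compat; lra). unfold Rdiv in *; lra.
Qed.

Lemma xHt_le (eps rho x : R) : 0 < eps -> Rabs x <= rho ->
  x * Ht eps x <= rho * ln (1 + 2 * rho / eps).
Proof.
  intros He Hx. pose proof (Ht_abs_le eps rho x He Hx).
  pose proof (L_nonneg eps rho He (Rle_trans _ _ _ (Rabs_pos x) Hx)).
  apply Rle_trans with (Rabs (x * Ht eps x)); [apply Rle_abs|].
  rewrite Rabs_mult. apply Rmult_le_compat; auto using Rabs_pos.
Qed.

Lemma hh_pos (eps x : R) : 0 < eps -> 0 < hh eps x.
Proof. intro. unfold hh. apply Rinv_0_lt_compat, sqrt_lt_R0, sq_pos; auto. Qed.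

Lemma s2hh_le (eps x : R) : 0 < eps -> x² * hh eps x <= Rabs x.
Proof.
  intro He. unfold hh. pose proof (sqrt_gt_abs eps x He). pose proof (Rabs_pos x).
  set (q := sqrt (x² + eps²)) in *.
  assert (Hx2 : x² = Rabs x * Rabs x) by (rewrite Rsqr_abs; reflexivity).
  rewrite Hx2. assert (/ q * q = 1) by (field; lra).
  apply Rmult_le_reg_r with q; [lra|].
  replace (Rabs x * Rabs x * / q * q) with (Rabs x * Rabs x * (/ q * q)) by ring. nra.
Qed.

Lemma is_derive_mult_R (f g : R -> R) x df dg :
  is_derive f x df -> is_derive g x dg ->
  is_derive (fun t => f t * g t) x (df * g x + f x * dg).
Proof. intros H1 H2. apply (is_derive_mult f g x df dg H1 H2). intros; apply Rmult_comm. Qed.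

Lemma is_derive_comp_R (f g : R -> R) x df dg :
  is_derive f (g x) df -> is_derive g x dg ->
  is_derive (fun t => f (g t)) x (dg * df).
Proof. intros H1 H2. apply (is_derive_comp f g x df dg H1 H2). Qed.

Lemma ex_derive_Ht_comp (eps : R) (f : R -> R) x : 0 < eps -> ex_derive f x ->
  ex_derive (fun t => Ht eps (f t)) x.
Proof.
  intros He [d Hd]. eexists. apply is_derive_comp_R; [apply Ht_derive; auto| exact Hd].
Qed.

Lemma ex_derive_hh_comp (eps : R) (f : R -> R) x : 0 < eps -> ex_derive f x ->
  ex_derive (fun t => hh eps (f t)) x.
Proof.
  intros He Hf. unfold hh. 
  apply (ex_derive_comp (fun y => / sqrt (y² + eps²)) f); [|auto].
  pose proof (sq_pos eps (f x) He). auto_derive. split; [lra|].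
  split; [|exact I]. pose proof (sqrt_lt_R0 _ H). lra.
Qed.

Lemma exd_plus (f g : R -> R) x : ex_derive f x -> ex_derive g x -> ex_derive (fun t => f t + g t) x.
Proof. intros H1 H2. exact (ex_derive_plus f g x H1 H2). Qed.
Lemma exd_minus (f g : R -> R) x : ex_derive f x -> ex_derive g x -> ex_derive (fun t => f t - g t) x.
Proof. intros H1 H2. exact (ex_derive_minus f g x H1 H2). Qed.
Lemma exd_const (k : R) x : ex_derive (fun _ : R => k) x.
Proof. exact (ex_derive_const k x). Qed.
Lemma exd_sq (f : R -> R) x : ex_derive f x -> ex_derive (fun t => (f t)²) x.
Proof. intro. unfold Rsqr. apply ex_derive_mult; auto. Qed.

Lemma exd_cont (f : R -> R) x : ex_derive f x -> continuous f x.
Proof. intro H. exact (ex_derive_continuous f x H). Qed.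

Section IBP.
Variables (eps P Q w a b : R).
Hypothesis He : 0 < eps.
Hypothesis Hw : w <> 0.
Hypothesis Hab : a <= b.
Hypothesis HPQ : 0 < P² + Q².

Let s u := P * cos (w * u) + Q * sin (w * u).
Let c u := - P * sin (w * u) + Q * cos (w * u).
Let rho := sqrt (P² + Q²).
Let L := ln (1 + 2 * rho / eps).

Lemma sc_sq u : (s u)² + (c u)² = rho².
Proof.
  unfold s, c, rho. rewrite Rsqr_sqrt; [|lra]. pose proof (sin2_cos2 (w*u)).
  unfold Rsqr in *. nra.
Qed.

Lemma rho_pos : 0 < rho.
Proof. apply sqrt_lt_R0; lra. Qed.

Lemma s_bound u : Rabs (s u) <= rho.
Proof.
  pose proof (sc_sq u). pose proof rho_pos. pose proof (Rle_0_sqr (c u)).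
  assert (H2 : (s u)² <= rho²) by lra. apply Rsqr_le_abs_0 in H2.
  rewrite (Rabs_right rho) in H2; lra.
Qed.

Lemma c_bound u : Rabs (c u) <= rho.
Proof.
  pose proof (sc_sq u). pose proof rho_pos. pose proof (Rle_0_sqr (s u)).
  assert (H2 : (c u)² <= rho²) by lra. apply Rsqr_le_abs_0 in H2.
  rewrite (Rabs_right rho) in H2; lra.
Qed.

Lemma s_der u : is_derive s u (w * c u).
Proof. unfold s, c. auto_derive; [exact I|]. ring. Qed.
Lemma c_der u : is_derive c u (- (w * s u)).
Proof. unfold s, c. auto_derive; [exact I|]. ring. Qed.

Let G0 u := rho + rho * L - s u * Ht eps (s u) + (c u)² * hh eps (s u).
Let Phi0 u := (rho + rho * L) * u + c u * Ht eps (s u) / w.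

Lemma Phi0_der u : is_derive Phi0 u (G0 u).
Proof.
  idtac.
  assert (H1 : is_derive (fun t => Ht eps (s t)) u (w * c u * hh eps (s u))).
  { apply is_derive_comp_R; [apply Ht_derive; auto| apply s_der]. }
  assert (H2 := is_derive_mult_R _ _ u _ _ (c_der u) H1).
  assert (H3 : is_derive (fun t => (rho + rho * L) * t) u (rho + rho * L)).
  { auto_derive; [exact I| ring]. }
  assert (Hk : is_derive (fun _ : R => / w) u 0) by (auto_derive; [exact I| ring]).
  assert (H4 := is_derive_mult_R _ _ u _ _ H2 Hk).
  assert (H5 := is_derive_plus _ _ u _ _ H3 H4).
  simpl in H5.
  replace (G0 u) with (plus (rho + rho * L)
       ((- (w * s u) * Ht eps (s u) + c u * (w * c u * hh eps (s u))) * / w +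
        c u * Ht eps (s u) * 0)).
  - eapply is_derive_ext; [|exact H5]. intro t. unfold Phi0, plus; simpl. unfold Rdiv. ring.
  - unfold G0, plus; simpl. unfold Rsqr. field. exact Hw.
Qed.
Lemma s_exd u : ex_derive s u.
Proof. eexists; apply s_der. Qed.
Lemma c_exd u : ex_derive c u.
Proof. eexists; apply c_der. Qed.

Lemma hh_s_ex : ex_RInt (fun u => hh eps (s u)) a b.
Proof.
  apply (ex_RInt_continuous (V:=R_CompleteNormedModule)). intros. apply exd_cont, ex_derive_hh_comp; auto using s_exd.
Qed.

Lemma G0_cont u : continuous G0 u.
Proof.
  apply exd_cont. unfold G0.
  apply exd_plus; [apply exd_minus|apply ex_derive_mult].
  - apply exd_const.
  - apply ex_derive_mult; [apply s_exd| apply ex_derive_Ht_comp; auto using s_exd].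
  - apply exd_sq, c_exd.
  - apply ex_derive_hh_comp; auto using s_exd.
Qed.

Lemma ibp_bound : RInt (fun u => hh eps (s u)) a b <=
   ((b - a) * (rho + rho * L) + 2 * rho * L / Rabs w) / rho².
Proof.
  assert (HG : is_RInt G0 a b (minus (Phi0 b) (Phi0 a))).
  { apply (is_RInt_derive (V:=R_CompleteNormedModule)); intros; [apply Phi0_der| apply G0_cont]. }
  assert (HGe : RInt G0 a b = Phi0 b - Phi0 a) by (apply is_RInt_unique; exact HG).
  pose proof rho_pos as Hr.
  assert (HL : 0 <= L) by (apply L_nonneg; lra).
  assert (Hle : RInt (fun u => rho² * hh eps (s u)) a b <= RInt G0 a b).
  { apply RInt_le; auto.
    - apply (ex_RInt_scal (fun u => hh eps (s u)) a b (rho²)), hh_s_ex.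
    - eexists; exact HG.
    - intros u _. unfold G0. rewrite <- (sc_sq u).
      pose proof (s2hh_le eps (s u) He). pose proof (s_bound u).
      pose proof (xHt_le eps rho (s u) He (s_bound u)). fold L in H1.
      nra. }
  assert (Hsc : RInt (fun u => rho² * hh eps (s u)) a b = rho² * RInt (fun u => hh eps (s u)) a b).
  { apply (RInt_scal (fun u => hh eps (s u)) a b (rho²)), hh_s_ex. }
  assert (Hbd : Phi0 b - Phi0 a <= (b - a) * (rho + rho * L) + 2 * rho * L / Rabs w).
  { unfold Phi0.
    assert (Hx : forall u, Rabs (c u * Ht eps (s u)) <= rho * L).
    { intro u. rewrite Rabs_mult. apply Rmult_le_compat; auto using Rabs_pos, c_bound.
      apply Ht_abs_le; auto using s_bound. }
    assert (Hw' : 0 < Rabs w) by (apply Rabs_pos_lt; auto).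
    assert (E : c b * Ht eps (s b) / w - c a * Ht eps (s a) / w
             = (c b * Ht eps (s b) - c a * Ht eps (s a)) / w) by (field; auto).
    assert (Hq : Rabs ((c b * Ht eps (s b) - c a * Ht eps (s a)) / w) <= 2 * rho * L / Rabs w).
    { unfold Rdiv. rewrite Rabs_mult, Rabs_inv. apply Rmult_le_compat_r.
      - left; apply Rinv_0_lt_compat; auto.
      - pose proof (Hx a); pose proof (Hx b).
        unfold Rminus. eapply Rle_trans; [apply Rabs_triang|]. rewrite Rabs_Ropp. lra. }
    pose proof (Rle_abs ((c b * Ht eps (s b) - c a * Ht eps (s a)) / w)). nra. }
  assert (Hr2 : 0 < rho²) by (unfold Rsqr; nra).
  apply Rmult_le_reg_l with (rho²); auto.
  replace (rho² * (((b - a) * (rho + rho * L) + 2 * rho * L / Rabs w) / rho²))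
    with ((b - a) * (rho + rho * L) + 2 * rho * L / Rabs w) by (field; split; [apply Rgt_not_eq, Rabs_pos_lt; auto| apply Rgt_not_eq; exact Hr2]).
  lra.
Qed.
End IBP.

Lemma abs_sin_le (t : R) : Rabs (sin t) <= Rabs t.
Proof.
  assert (Hp : forall t, 0 < t -> - t <= sin t <= t).
  { intros u Hu. split; [|left; apply sin_lt_x; auto].
    destruct (Rle_dec u PI).
    - assert (0 <= sin u) by (apply sin_ge_0; lra). lra.
    - pose proof (SIN_bound u). pose proof PI_RGT_0. pose proof PI_4. 
      pose proof PI2_1. lra. }
  destruct (Rtotal_order t 0) as [H|[H|H]].
  - destruct (Hp (-t)) as [H1 H2]; [lra|]. rewrite sin_neg in *.
    rewrite (Rabs_left t) by lra. unfold Rabs; destruct Rcase_abs; lra.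
  - subst. rewrite sin_0. lra.
  - destruct (Hp t) as [H1 H2]; [lra|].
    rewrite (Rabs_right t) by lra. unfold Rabs; destruct Rcase_abs; lra.
Qed.

Lemma sin_lip (x y : R) : Rabs (sin x - sin y) <= Rabs (x - y).
Proof.
  rewrite form4. rewrite !Rabs_mult. pose proof (abs_sin_le ((x - y) / 2)).
  assert (Rabs (cos ((x + y) / 2)) <= 1) by (apply Rabs_le; apply COS_bound).
  rewrite Rabs_right by lra.
  replace (Rabs ((x - y) / 2)) with (Rabs (x - y) / 2) in H.
  - pose proof (Rabs_pos (cos ((x + y) / 2))). pose proof (Rabs_pos (sin ((x - y) / 2))). nra.
  - unfold Rdiv. rewrite Rabs_mult. rewrite (Rabs_right (/2)); lra.
Qed.

Lemma cos_lip (x y : R) : Rabs (cos x - cos y) <= Rabs (x - y).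
Proof.
  rewrite form2. rewrite !Rabs_mult. pose proof (abs_sin_le ((x - y) / 2)).
  assert (Rabs (sin ((x + y) / 2)) <= 1) by (apply Rabs_le; apply SIN_bound).
  rewrite Rabs_left by lra.
  replace (Rabs ((x - y) / 2)) with (Rabs (x - y) / 2) in H.
  - pose proof (Rabs_pos (sin ((x + y) / 2))). pose proof (Rabs_pos (sin ((x - y) / 2))). nra.
  - unfold Rdiv. rewrite Rabs_mult. rewrite (Rabs_right (/2)); lra.
Qed.

Definition gY (Y x : R) : R := Y / Rmax 1 (Y * dist_int x).

Lemma Rmax_ge1 (t : R) : 1 <= Rmax 1 t.
Proof. apply Rmax_l. Qed.

Lemma capinv_eq (x Y : R) : 0 < Y -> capinv x Y = gY Y x.
Proof.
  intro HY. unfold capinv, gY. pose proof (dist_int_nonneg x).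
  destruct (Req_EM_T (dist_int x) 0) as [E|E].
  - rewrite E, Rmult_0_r. rewrite Rmax_left by lra. field.
  - assert (Hd : 0 < dist_int x) by lra.
    unfold Rmin, Rmax. destruct (Rle_dec (/ dist_int x) Y); destruct (Rle_dec 1 (Y * dist_int x)).
    + field. lra.
    + exfalso. assert (1 <= Y * dist_int x); [|lra].
      apply Rmult_le_compat_r with (r := dist_int x) in r; [|lra].
      rewrite Rinv_l in r; lra.
    + exfalso. apply n. apply Rmult_le_reg_r with (dist_int x); auto.
      rewrite Rinv_l by lra. lra.
    + field.
Qed.

Lemma gY_pos (Y x : R) : 0 < Y -> 0 < gY Y x.
Proof. intro. unfold gY. pose proof (Rmax_ge1 (Y * dist_int x)). apply Rdiv_lt_0_compat; lra. Qed.

Lemma gY_le (Y x : R) : 0 < Y -> gY Y x <= Y.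
Proof.
  intro. unfold gY. pose proof (Rmax_ge1 (Y * dist_int x)).
  apply Rmult_le_reg_r with (Rmax 1 (Y * dist_int x)); [lra|].
  unfold Rdiv. rewrite Rmult_assoc, Rinv_l by lra. nra.
Qed.

Lemma gY_lower (Y x : R) : 0 < Y -> Y / Rmax 1 (Y / 2) <= gY Y x.
Proof.
  intro HY. unfold gY. pose proof (dist_int_half x). pose proof (dist_int_nonneg x).
  apply Rmult_le_compat_l; [lra|]. apply Rinv_le_contravar.
  - pose proof (Rmax_ge1 (Y * dist_int x)); lra.
  - apply Rle_max_compat_l. nra.
Qed.

Lemma gY_bound (Y d sg : R) : 0 < Y -> 0 <= d -> sg² <= d² ->
  Y / Rmax 1 (Y * d) <= sqrt 2 * hh (/ Y) sg.
Proof.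
  intros HY Hd Hs. unfold hh. set (M := Rmax 1 (Y * d)).
  assert (HM1 : 1 <= M) by apply Rmax_ge1.
  assert (HM2 : Y * d <= M) by apply Rmax_r.
  assert (Ht : 0 < sg² + (/ Y)²) by (apply sq_pos; apply Rinv_0_lt_compat; auto).
  assert (Hsq : 0 < sqrt (sg² + (/ Y)²)) by (apply sqrt_lt_R0; auto).
  assert (Hk : (Y / M)² * (sg² + (/ Y)²) <= 2).
  { unfold Rsqr in *. 
    replace (Y / M * (Y / M) * (sg * sg + / Y * / Y)) with ((Y * Y * (sg * sg) + 1) / (M * M)) by (field; lra).
    apply Rmult_le_reg_r with (M * M); [nra|]. unfold Rdiv. rewrite Rmult_assoc, Rinv_l by nra.
    assert (Y * Y * (sg * sg) <= (Y * d) * (Y * d)) by (apply Rmult_le_compat_l with (r := Y * Y) in Hs; [nra| nra]).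
    assert (0 <= Y * d) by nra. assert ((Y * d) * (Y * d) <= M * M) by nra. nra. }
  assert (E : Y / M = sqrt ((Y / M)²)) by (rewrite sqrt_Rsqr; [reflexivity| apply Rlt_le, Rdiv_lt_0_compat; lra]).
  rewrite E. apply Rmult_le_reg_r with (sqrt (sg² + (/ Y)²)); auto.
  rewrite Rmult_assoc, Rinv_l by lra. rewrite Rmult_1_r.
  rewrite <- sqrt_mult_alt by apply Rle_0_sqr. apply sqrt_le_1_alt. exact Hk.
Qed.

Lemma gY_lip (Y x y : R) : 0 < Y -> Rabs (gY Y x - gY Y y) <= Y * Y * Rabs (x - y).
Proof.
  intro HY. unfold gY.
  set (M1 := Rmax 1 (Y * dist_int x)). set (M2 := Rmax 1 (Y * dist_int y)).
  assert (H1 : 1 <= M1) by apply Rmax_ge1. assert (H2 : 1 <= M2) by apply Rmax_ge1.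
  assert (HMd : Rabs (M1 - M2) <= Y * Rabs (x - y)).
  { pose proof (dist_int_lip x y). pose proof (dist_int_lip y x).
    rewrite Rabs_minus_sym in H0.
    apply Rabs_le. unfold M1, M2, Rmax.
    destruct (Rle_dec 1 (Y * dist_int x)); destruct (Rle_dec 1 (Y * dist_int y)); split; nra. }
  replace (Y / M1 - Y / M2) with (Y * (M2 - M1) / (M1 * M2)) by (field; lra).
  unfold Rdiv. rewrite !Rabs_mult. rewrite (Rabs_right Y) by lra.
  rewrite Rabs_inv, (Rabs_right (M1 * M2)) by nra. rewrite Rabs_minus_sym.
  assert (0 < / (M1 * M2) <= 1).
  { split. apply Rinv_0_lt_compat; nra. rewrite <- Rinv_1. apply Rinv_le_contravar; nra. }
  pose proof (Rabs_pos (M1 - M2)).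
  assert (Rabs (M1 - M2) * / (M1 * M2) <= Rabs (M1 - M2)) by nra.
  assert (Y * (Rabs (M1 - M2) * / (M1 * M2)) <= Y * (Y * Rabs (x - y))) by nra.
  lra.
Qed.

Lemma lip_cont (f : R -> R) (M x : R) : 0 < M ->
  (forall y, Rabs (f y - f x) <= M * Rabs (y - x)) -> continuous f x.
Proof.
  intros HM H. apply continuity_pt_filterlim.
  intros eps He. exists (eps / M). split; [apply Rdiv_lt_0_compat; auto|].
  intros y [_ Hy]. simpl in *. unfold R_dist in *. eapply Rle_lt_trans; [apply H|].
  apply Rmult_lt_compat_l with (r := M) in Hy; auto.
  replace (M * (eps / M)) with eps in Hy by (field; lra). exact Hy.
Qed.

Lemma gY_cont (Y k r : R) : 0 < Y -> continuous (fun t => gY Y (k * t)) r.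
Proof.
  intro HY. apply lip_cont with (M := Y * Y * (Rabs k + 1)); [pose proof (Rabs_pos k); nra|].
  intro t. eapply Rle_trans; [apply gY_lip; auto|].
  replace (k * t - k * r) with (k * (t - r)) by ring. rewrite Rabs_mult.
  pose proof (Rabs_pos k). pose proof (Rabs_pos (t - r)). nra.
Qed.

Lemma gY_ex (Y k A B : R) : 0 < Y -> ex_RInt (fun r => gY Y (k * r)) A B.
Proof.
  intro HY. apply (ex_RInt_continuous (V:=R_CompleteNormedModule)). intros. apply gY_cont; auto.
Qed.

Definition L2 (Y : R) := ln (1 + 2 * Y / PI).

Lemma L2_nonneg (Y : R) : 0 < Y -> 0 <= L2 Y.
Proof.
  intro. unfold L2. rewrite <- ln_1. apply ln_mono; [lra|].
  pose proof PI_RGT_0. assert (0 <= 2 * Y / PI) by (apply Rdiv_le_0_compat; lra). lra.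
Qed.

Definition Bnd (A B Y k : R) :=
  sqrt 2 * (PI * (B - A) * (1 + L2 Y) + 4 * B * L2 Y) + (B - A) * (sqrt 2 * hh (/ Y) (A * k)).

Lemma inner_bound (A B Y k : R) : 0 < A -> A < B -> 0 < Y ->
  RInt (fun r => gY Y (k * r)) A B <= Bnd A B Y k.
Proof.
  intros HA HAB HY. unfold Bnd.
  pose proof PI_RGT_0 as Hpi. pose proof (L2_nonneg Y HY) as HL.
  assert (Hs2 : 0 < sqrt 2) by (apply sqrt_lt_R0; lra).
  assert (HT1 : 0 <= sqrt 2 * (PI * (B - A) * (1 + L2 Y) + 4 * B * L2 Y)).
  { assert (0 <= PI * (B - A)) by (apply Rmult_le_pos; lra). assert (0 <= PI * (B - A) * (1 + L2 Y)) by (apply Rmult_le_pos; lra). assert (0 <= 4 * B * L2 Y) by (apply Rmult_le_pos; [|lra]; lra). apply Rmult_le_pos; lra. }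
  assert (HT2 : 0 <= (B - A) * (sqrt 2 * hh (/ Y) (A * k))).
  { pose proof (hh_pos (/ Y) (A * k) (Rinv_0_lt_compat _ HY)). apply Rmult_le_pos; [lra|]; apply Rmult_le_pos; lra. }
  destruct (Rle_dec (Rabs k * B) (1/2)) as [Hk|Hk].
  - assert (Hle : RInt (fun r => gY Y (k * r)) A B <= RInt (fun _ => sqrt 2 * hh (/ Y) (A * k)) A B).
    { apply RInt_le; [lra| apply gY_ex; auto| apply ex_RInt_const|].
      intros r Hr. unfold gY.
      assert (Hkr : Rabs (k * r) <= 1/2).
      { rewrite Rabs_mult, (Rabs_right r) by lra. pose proof (Rabs_pos k). nra. }
      rewrite (dist_int_small _ Hkr). apply gY_bound; auto using Rabs_pos.
      rewrite <- Rsqr_abs. unfold Rsqr. assert (A * A <= r * r) by nra. assert (0 <= k * k) by nra.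
      replace (A * k * (A * k)) with ((A * A) * (k * k)) by ring. replace (k * r * (k * r)) with ((r * r) * (k * k)) by ring. nra. }
    rewrite RInt_const in Hle. unfold scal in Hle; simpl in Hle. unfold mult in Hle; simpl in Hle.
    lra.
  - assert (Hk0 : k <> 0) by (intro E; subst; rewrite Rabs_R0 in Hk; lra).
    set (s := fun r => 0 * cos ((PI * k) * r) + / PI * sin ((PI * k) * r)).
    assert (Hw : PI * k <> 0) by (apply Rmult_integral_contrapositive; split; lra).
    assert (HPQ : 0 < 0² + (/ PI)²) by (unfold Rsqr; pose proof (Rinv_0_lt_compat _ Hpi); nra).
    assert (Hibp := ibp_bound (/ Y) 0 (/ PI) (PI * k) A B (Rinv_0_lt_compat _ HY) Hw (Rlt_le _ _ HAB) HPQ).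
    assert (Hrho : sqrt (0² + (/ PI)²) = / PI).
    { rewrite Rsqr_0, Rplus_0_l. apply sqrt_Rsqr. left; apply Rinv_0_lt_compat; auto. }
    rewrite Hrho in Hibp.
    replace (ln (1 + 2 * / PI / / Y)) with (L2 Y) in Hibp
      by (unfold L2; f_equal; field; split; lra).
    assert (Hle : RInt (fun r => gY Y (k * r)) A B <= RInt (fun r => sqrt 2 * hh (/ Y) (s r)) A B).
    { apply RInt_le; [lra| apply gY_ex; auto| |].
      - apply (ex_RInt_scal (fun r => hh (/ Y) (s r)) A B (sqrt 2)), hh_s_ex; auto.
        apply Rinv_0_lt_compat; auto.
      - intros r Hr. unfold gY. apply gY_bound; auto using dist_int_nonneg.
        pose proof (sin_dist (k * r)). unfold s. rewrite Rmult_assoc.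
        unfold Rsqr in *. rewrite Rmult_0_l, Rplus_0_l.
        replace (/ PI * sin (PI * (k * r)) * (/ PI * sin (PI * (k * r))))
          with ((sin (PI * (k * r)) * sin (PI * (k * r))) / (PI * PI)) by (field; lra).
        apply Rmult_le_reg_r with (PI * PI); [nra|]. unfold Rdiv.
        rewrite Rmult_assoc, Rinv_l by nra. nra. }
    assert (Hsc : RInt (fun r => sqrt 2 * hh (/ Y) (s r)) A B = sqrt 2 * RInt (fun r => hh (/ Y) (s r)) A B).
    { apply (RInt_scal (fun r => hh (/ Y) (s r)) A B (sqrt 2)), hh_s_ex; auto. apply Rinv_0_lt_compat; auto. }
    assert (Hkpos : 0 < Rabs k) by (apply Rabs_pos_lt; auto).
    assert (Hb : ((B - A) * (/ PI + / PI * L2 Y) + 2 * / PI * L2 Y / Rabs (PI * k)) / (/ PI)²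
                 <= PI * (B - A) * (1 + L2 Y) + 4 * B * L2 Y).
    { rewrite Rabs_mult, (Rabs_right PI) by lra.
      replace (((B - A) * (/ PI + / PI * L2 Y) + 2 * / PI * L2 Y / (PI * Rabs k)) / (/ PI)²)
        with (PI * (B - A) * (1 + L2 Y) + 2 * L2 Y / Rabs k) by (unfold Rsqr; field; lra).
      assert (2 / Rabs k <= 4 * B).
      { apply Rmult_le_reg_r with (Rabs k); auto. unfold Rdiv. rewrite Rmult_assoc, Rinv_l by lra. lra. }
      unfold Rdiv in *. nra. }
    unfold s in Hsc, Hle. nra.
Qed.

Lemma integrand_eq (a b Y t r : R) : 0 < Y ->
  integrand (a, b) Y t r =
  sqrt (gY Y ((a * sin t + b * cos t) * r)) * sqrt (gY Y ((a * cos t - b * sin t) * r)).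
Proof.
  intro HY. unfold integrand. rewrite !capinv_eq by auto.
  unfold cexpi, Cmult, RtoC, Re, Im; simpl.
  f_equal; f_equal; f_equal; ring.
Qed.

Definition mY (Y : R) := Y / Rmax 1 (Y / 2).
Definition Ls (Y : R) := Y * Y / (2 * sqrt (mY Y)).

Lemma mY_pos (Y : R) : 0 < Y -> 0 < mY Y.
Proof. intro. unfold mY. pose proof (Rmax_ge1 (Y / 2)). apply Rdiv_lt_0_compat; lra. Qed.

Lemma Ls_pos (Y : R) : 0 < Y -> 0 < Ls Y.
Proof.
  intro. unfold Ls. pose proof (sqrt_lt_R0 _ (mY_pos Y H)). apply Rdiv_lt_0_compat; nra.
Qed.

Lemma sqrt_gY_lip (Y x y : R) : 0 < Y ->
  Rabs (sqrt (gY Y x) - sqrt (gY Y y)) <= Ls Y * Rabs (x - y).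
Proof.
  intro HY. pose proof (gY_lower Y x HY). pose proof (gY_lower Y y HY).
  fold (mY Y) in H, H0. pose proof (mY_pos Y HY).
  assert (Hm : 0 < sqrt (mY Y)) by (apply sqrt_lt_R0; auto).
  assert (Hx : sqrt (mY Y) <= sqrt (gY Y x)) by (apply sqrt_le_1_alt; auto).
  assert (Hy : sqrt (mY Y) <= sqrt (gY Y y)) by (apply sqrt_le_1_alt; auto).
  assert (E : sqrt (gY Y x) - sqrt (gY Y y) = (gY Y x - gY Y y) / (sqrt (gY Y x) + sqrt (gY Y y))).
  { field_simplify_eq; [|lra].
    rewrite <- !Rsqr_pow2, !Rsqr_sqrt; try lra. }
  rewrite E. unfold Rdiv. rewrite Rabs_mult, Rabs_inv, (Rabs_right (sqrt (gY Y x) + sqrt (gY Y y))) by lra.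
  pose proof (gY_lip Y x y HY).
  assert (Hi : / (sqrt (gY Y x) + sqrt (gY Y y)) <= / (2 * sqrt (mY Y))).
  { apply Rinv_le_contravar; lra. }
  unfold Ls. unfold Rdiv.
  pose proof (Rabs_pos (gY Y x - gY Y y)). pose proof (Rabs_pos (x - y)).
  assert (0 < / (sqrt (gY Y x) + sqrt (gY Y y))) by (apply Rinv_0_lt_compat; lra).
  assert (Rabs (gY Y x - gY Y y) * / (sqrt (gY Y x) + sqrt (gY Y y)) <= Y * Y * Rabs (x - y) * / (2 * sqrt (mY Y))).
  { apply Rmult_le_compat; try lra. }
  lra.
Qed.

Lemma prod_lip (Y u1 u2 v1 v2 : R) : 0 < Y ->
  Rabs (sqrt (gY Y u1) * sqrt (gY Y v1) - sqrt (gY Y u2) * sqrt (gY Y v2))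
  <= sqrt Y * Ls Y * (Rabs (u1 - u2) + Rabs (v1 - v2)).
Proof.
  intro HY.
  replace (sqrt (gY Y u1) * sqrt (gY Y v1) - sqrt (gY Y u2) * sqrt (gY Y v2))
    with (sqrt (gY Y u1) * (sqrt (gY Y v1) - sqrt (gY Y v2)) + sqrt (gY Y v2) * (sqrt (gY Y u1) - sqrt (gY Y u2))) by ring.
  eapply Rle_trans; [apply Rabs_triang|]. rewrite !Rabs_mult.
  assert (H1 : Rabs (sqrt (gY Y u1)) <= sqrt Y).
  { rewrite Rabs_right by (apply Rle_ge, sqrt_pos). apply sqrt_le_1_alt, gY_le; auto. }
  assert (H2 : Rabs (sqrt (gY Y v2)) <= sqrt Y).
  { rewrite Rabs_right by (apply Rle_ge, sqrt_pos). apply sqrt_le_1_alt, gY_le; auto. }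
  pose proof (sqrt_gY_lip Y v1 v2 HY). pose proof (sqrt_gY_lip Y u1 u2 HY).
  pose proof (Rabs_pos (sqrt (gY Y u1))). pose proof (Rabs_pos (sqrt (gY Y v2))).
  pose proof (Rabs_pos (sqrt (gY Y v1) - sqrt (gY Y v2))). pose proof (Rabs_pos (sqrt (gY Y u1) - sqrt (gY Y u2))).
  pose proof (Ls_pos Y HY). pose proof (sqrt_pos Y).
  assert (Rabs (sqrt (gY Y u1)) * Rabs (sqrt (gY Y v1) - sqrt (gY Y v2)) <= sqrt Y * (Ls Y * Rabs (v1 - v2)))
    by (apply Rmult_le_compat; auto).
  assert (Rabs (sqrt (gY Y v2)) * Rabs (sqrt (gY Y u1) - sqrt (gY Y u2)) <= sqrt Y * (Ls Y * Rabs (u1 - u2)))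
    by (apply Rmult_le_compat; auto).
  lra.
Qed.

Definition fth (a b Y t r : R) :=
  sqrt (gY Y ((a * sin t + b * cos t) * r)) * sqrt (gY Y ((a * cos t - b * sin t) * r)).

Lemma fth_cont_r (a b Y t r : R) : 0 < Y -> continuous (fth a b Y t) r.
Proof.
  intro HY. set (p := a * sin t + b * cos t). set (q := a * cos t - b * sin t).
  pose proof (Ls_pos Y HY). pose proof (sqrt_pos Y). pose proof (Rabs_pos p). pose proof (Rabs_pos q).
  apply lip_cont with (M := sqrt Y * Ls Y * (Rabs p + Rabs q) + 1).
  { assert (0 <= sqrt Y * Ls Y * (Rabs p + Rabs q)) by (apply Rmult_le_pos; [apply Rmult_le_pos|]; lra). lra. }
  intro y. unfold fth. fold p q. eapply Rle_trans; [apply prod_lip; auto|].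
  replace (p * y - p * r) with (p * (y - r)) by ring. replace (q * y - q * r) with (q * (y - r)) by ring.
  rewrite !Rabs_mult. pose proof (Rabs_pos (y - r)).
  assert (0 <= sqrt Y * Ls Y) by (apply Rmult_le_pos; lra).
  replace (sqrt Y * Ls Y * (Rabs p * Rabs (y - r) + Rabs q * Rabs (y - r)))
    with ((sqrt Y * Ls Y * (Rabs p + Rabs q)) * Rabs (y - r)) by ring.
  nra.
Qed.

Lemma fth_ex (a b Y t A B : R) : 0 < Y -> ex_RInt (fth a b Y t) A B.
Proof.
  intro HY. apply (ex_RInt_continuous (V:=R_CompleteNormedModule)). intros. apply fth_cont_r; auto.
Qed.

Lemma trig_lip1 (a b t t0 : R) :
  Rabs ((a * sin t + b * cos t) - (a * sin t0 + b * cos t0)) <= (Rabs a + Rabs b) * Rabs (t - t0).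
Proof.
  replace ((a * sin t + b * cos t) - (a * sin t0 + b * cos t0)) with (a * (sin t - sin t0) + b * (cos t - cos t0)) by ring.
  eapply Rle_trans; [apply Rabs_triang|]. rewrite !Rabs_mult.
  pose proof (sin_lip t t0). pose proof (cos_lip t t0). pose proof (Rabs_pos a). pose proof (Rabs_pos b).
  nra.
Qed.

Lemma trig_lip2 (a b t t0 : R) :
  Rabs ((a * cos t - b * sin t) - (a * cos t0 - b * sin t0)) <= (Rabs a + Rabs b) * Rabs (t - t0).
Proof.
  replace ((a * cos t - b * sin t) - (a * cos t0 - b * sin t0)) with (a * (cos t - cos t0) + (- b) * (sin t - sin t0)) by ring.
  eapply Rle_trans; [apply Rabs_triang|]. rewrite !Rabs_mult, Rabs_Ropp.
  pose proof (sin_lip t t0). pose proof (cos_lip t t0). pose proof (Rabs_pos a). pose proof (Rabs_pos b).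
  nra.
Qed.

Lemma Inner_cont (a b Y A B t0 : R) : 0 < Y -> 0 < A -> A < B ->
  continuous (fun t => RInt (fth a b Y t) A B) t0.
Proof.
  intros HY HA HAB.
  set (K := sqrt Y * Ls Y * (2 * B * (Rabs a + Rabs b))).
  assert (HK : 0 <= K).
  { pose proof (Ls_pos Y HY). pose proof (sqrt_pos Y). pose proof (Rabs_pos a). pose proof (Rabs_pos b).
    unfold K. apply Rmult_le_pos; [apply Rmult_le_pos|]; nra. }
  apply lip_cont with (M := (B - A) * K + 1); [nra|].
  intro t.
  rewrite <- (RInt_minus (V:=R_CompleteNormedModule)) by (apply fth_ex; auto).
  eapply Rle_trans.
  { apply (abs_RInt_le_const _ A B (K * Rabs (t - t0))); [lra| |].
    - apply (ex_RInt_minus (V:=R_NormedModule)); apply fth_ex; auto.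
    - intros r Hr. unfold minus, plus, opp; simpl. fold (Rminus (fth a b Y t r) (fth a b Y t0 r)).
      unfold fth. eapply Rle_trans; [apply prod_lip; auto|].
      rewrite <- !Rmult_minus_distr_r, !Rabs_mult, (Rabs_right r) by lra.
      pose proof (trig_lip1 a b t t0). pose proof (trig_lip2 a b t t0).
      pose proof (Ls_pos Y HY). pose proof (sqrt_pos Y).
      assert (0 <= sqrt Y * Ls Y) by (apply Rmult_le_pos; lra).
      pose proof (Rabs_pos (a * sin t + b * cos t - (a * sin t0 + b * cos t0))).
      pose proof (Rabs_pos (a * cos t - b * sin t - (a * cos t0 - b * sin t0))).
      pose proof (Rabs_pos (t - t0)). pose proof (Rabs_pos a). pose proof (Rabs_pos b).
      unfold K.
      assert (Rabs (a * sin t + b * cos t - (a * sin t0 + b * cos t0)) * r +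
              Rabs (a * cos t - b * sin t - (a * cos t0 - b * sin t0)) * r
              <= 2 * B * (Rabs a + Rabs b) * Rabs (t - t0)) by nra.
      replace (sqrt Y * Ls Y * (2 * B * (Rabs a + Rabs b)) * Rabs (t - t0))
        with (sqrt Y * Ls Y * (2 * B * (Rabs a + Rabs b) * Rabs (t - t0))) by ring.
      apply Rmult_le_compat_l; auto. }
  pose proof (Rabs_pos (t - t0)). nra.
Qed.

Lemma sqrt_prod_le (u v : R) : 0 <= u -> 0 <= v -> sqrt u * sqrt v <= (u + v) / 2.
Proof.
  intros Hu Hv. pose proof (sqrt_sqrt u Hu). pose proof (sqrt_sqrt v Hv).
  pose proof (Rle_0_sqr (sqrt u - sqrt v)). unfold Rsqr in *. nra.
Qed.

Lemma inner_le (a b Y A B t : R) : 0 < A -> A < B -> 0 < Y ->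
  RInt (fth a b Y t) A B <=
  (Bnd A B Y (a * sin t + b * cos t) + Bnd A B Y (a * cos t - b * sin t)) / 2.
Proof.
  intros HA HAB HY.
  set (k1 := a * sin t + b * cos t). set (k2 := a * cos t - b * sin t).
  assert (H1 := RInt_correct _ _ _ (gY_ex Y k1 A B HY)).
  assert (H2 := RInt_correct _ _ _ (gY_ex Y k2 A B HY)).
  assert (H3 := is_RInt_scal _ _ _ (/2) _ (is_RInt_plus _ _ _ _ _ _ H1 H2)).
  assert (H4 : is_RInt (fun r => (gY Y (k1 * r) + gY Y (k2 * r)) / 2) A B
     ((RInt (fun r => gY Y (k1 * r)) A B + RInt (fun r => gY Y (k2 * r)) A B) / 2)).
  { match goal with |- is_RInt _ _ _ ?v => replace v with (scal (/ 2)
       (plus (RInt (fun r : R => gY Y (k1 * r)) A B)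
          (RInt (fun r : R => gY Y (k2 * r)) A B))) end.
    2: { unfold scal, plus; simpl. unfold mult; simpl. field. }
    eapply is_RInt_ext; [|exact H3]. intros; unfold scal, plus; simpl. unfold mult; simpl. field. }
  assert (Hle : RInt (fth a b Y t) A B <= RInt (fun r => (gY Y (k1 * r) + gY Y (k2 * r)) / 2) A B).
  { apply RInt_le; [lra| apply fth_ex; auto| eexists; exact H4|].
    intros r _. unfold fth. fold k1 k2. apply sqrt_prod_le; apply Rlt_le, gY_pos; auto. }
  rewrite (is_RInt_unique _ _ _ _ H4) in Hle.
  pose proof (inner_bound A B Y k1 HA HAB HY). pose proof (inner_bound A B Y k2 HA HAB HY).
  lra.
Qed.

Lemma ibp_circle (eps P Q : R) : 0 < eps -> 0 < P² + Q² ->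
  RInt (fun u => hh eps (P * cos (1 * u) + Q * sin (1 * u))) (- PI) PI <=
  (2 * PI + (2 * PI + 2) * ln (1 + 2 * sqrt (P² + Q²) / eps)) / sqrt (P² + Q²).
Proof.
  intros He HPQ. pose proof PI_RGT_0.
  assert (Hb := ibp_bound eps P Q 1 (- PI) PI He ltac:(lra) ltac:(lra) HPQ). simpl in Hb.
  eapply Rle_trans; [exact Hb|].
  assert (Hr : 0 < sqrt (P² + Q²)) by (apply sqrt_lt_R0; auto).
  set (r := sqrt (P² + Q²)) in *. set (L := ln (1 + 2 * r / eps)).
  rewrite Rabs_R1. right. unfold Rsqr. field. lra.
Qed.

Definition T1 (A B Y : R) := sqrt 2 * (PI * (B - A) * (1 + L2 Y) + 4 * B * L2 Y).

Lemma outer_le (a b Y A B : R) : 0 < A -> A < B -> 0 < Y -> 0 < a² + b² ->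
  RInt (fun t => RInt (fth a b Y t) A B) (- PI) PI <=
  2 * PI * T1 A B Y + (B - A) * sqrt 2 *
    ((2 * PI + (2 * PI + 2) * ln (1 + 2 * (A * sqrt (a² + b²)) / / Y)) / (A * sqrt (a² + b²))).
Proof.
  intros HA HAB HY Hab. pose proof PI_RGT_0 as Hpi.
  assert (HiY : 0 < / Y) by (apply Rinv_0_lt_compat; auto).
  set (h1 := fun u => hh (/ Y) ((A * b) * cos (1 * u) + (A * a) * sin (1 * u))).
  set (h2 := fun u => hh (/ Y) ((A * a) * cos (1 * u) + (- (A * b)) * sin (1 * u))).
  assert (E1 : ex_RInt h1 (- PI) PI) by (apply hh_s_ex; auto).
  assert (E2 : ex_RInt h2 (- PI) PI) by (apply hh_s_ex; auto).
  set (c := (B - A) * sqrt 2 / 2).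
  assert (HM : is_RInt (fun u => T1 A B Y + c * (h1 u + h2 u)) (- PI) PI
                 (2 * PI * T1 A B Y + c * (RInt h1 (- PI) PI + RInt h2 (- PI) PI))).
  { assert (H0 := is_RInt_const (- PI) PI (T1 A B Y)).
    assert (H12 := is_RInt_scal _ _ _ c _ (is_RInt_plus _ _ _ _ _ _ (RInt_correct _ _ _ E1) (RInt_correct _ _ _ E2))).
    assert (H := is_RInt_plus _ _ _ _ _ _ H0 H12).
    match goal with |- is_RInt _ _ _ ?v => replace v with
      (plus (scal (PI - - PI) (T1 A B Y)) (scal c (plus (RInt h1 (- PI) PI) (RInt h2 (- PI) PI)))) end.
    2: { unfold scal, plus; simpl. unfold mult; simpl. ring. }
    eapply is_RInt_ext; [|exact H]. intros; unfold scal, plus; simpl. unfold mult; simpl. ring. }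
  assert (Hle : RInt (fun t => RInt (fth a b Y t) A B) (- PI) PI <=
                RInt (fun u => T1 A B Y + c * (h1 u + h2 u)) (- PI) PI).
  { apply RInt_le; [lra| | eexists; exact HM|].
    - apply (ex_RInt_continuous (V:=R_CompleteNormedModule)). intros. apply Inner_cont; auto.
    - intros t _. eapply Rle_trans; [apply inner_le; auto|].
      unfold Bnd, T1, c, h1, h2. fold (T1 A B Y).
      rewrite !Rmult_1_l.
      replace (A * b * cos t + A * a * sin t) with (A * (a * sin t + b * cos t)) by ring.
      replace (A * a * cos t + - (A * b) * sin t) with (A * (a * cos t - b * sin t)) by ring.
      unfold T1. right. field. }
  rewrite (is_RInt_unique _ _ _ _ HM) in Hle.
  assert (Hr : sqrt ((A * b)² + (A * a)²) = A * sqrt (a² + b²)).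
  { replace ((A * b)² + (A * a)²) with (A² * (a² + b²)) by (unfold Rsqr; ring).
    rewrite sqrt_mult by (apply Rle_0_sqr || lra). rewrite sqrt_Rsqr; lra. }
  assert (Hr' : sqrt ((A * a)² + (- (A * b))²) = A * sqrt (a² + b²)).
  { rewrite <- Rsqr_neg, Rplus_comm. exact Hr. }
  assert (HP1 : 0 < (A * b)² + (A * a)²).
  { replace ((A * b)² + (A * a)²) with (A² * (a² + b²)) by (unfold Rsqr; ring).
    apply Rmult_lt_0_compat; auto. unfold Rsqr; nra. }
  assert (HP2 : 0 < (A * a)² + (- (A * b))²) by (rewrite <- Rsqr_neg; lra).
  pose proof (ibp_circle (/ Y) (A * b) (A * a) HiY HP1) as I1.
  pose proof (ibp_circle (/ Y) (A * a) (- (A * b)) HiY HP2) as I2.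
  rewrite Hr in I1. rewrite Hr' in I2. fold h1 in I1. fold h2 in I2.
  assert (Hc : 0 <= c).
  { unfold c. pose proof (sqrt_pos 2). apply Rmult_le_pos; [apply Rmult_le_pos|]; lra. }
  unfold c in *. nra.
Qed.

Lemma ln_le_x (x : R) : 0 <= x -> ln (1 + x) <= x.
Proof.
  intro. rewrite <- (ln_exp x) at 2. apply ln_mono; [lra| apply exp_ineq1_le].
Qed.

Theorem lemma5 (A B : R) (hA : 0 < A) (hAB : A < B) :
  exists K : R, 0 < K /\
    forall (z : C) (Y : R), z <> RtoC 0 -> 0 < Y ->
      RInt (fun t => RInt (fun r => integrand z Y t r) A B) (- PI) PI
        <= K * Rmax 1 (/ Cmod z) * ln (2 + Y).
Proof.
  pose proof PI_RGT_0 as Hpi. pose proof (sqrt_lt_R0 2 ltac:(lra)) as Hs2.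
  set (K := 2 * PI * sqrt 2 * (3 * PI * (B - A) + 4 * B)
            + (B - A) * sqrt 2 * ((6 * PI + 2) / A + 4 * (2 * PI + 2))).
  assert (HiA : 0 < / A) by (apply Rinv_0_lt_compat; auto).
  assert (HK1 : 0 < 2 * PI * sqrt 2 * (3 * PI * (B - A) + 4 * B)).
  { apply Rmult_lt_0_compat; [nra|]. nra. }
  assert (HK2 : 0 <= (B - A) * sqrt 2 * ((6 * PI + 2) / A + 4 * (2 * PI + 2))).
  { apply Rmult_le_pos; [apply Rmult_le_pos; lra|]. unfold Rdiv.
    assert (0 <= (6 * PI + 2) * / A) by (apply Rmult_le_pos; lra). lra. }
  exists K. split; [unfold K; lra|].
  intros [a b] Y Hz HY.
  assert (Hab : 0 < a² + b²).
  { destruct (Req_dec a 0) as [Ha|Ha]; destruct (Req_dec b 0) as [Hb|Hb].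
    - exfalso. apply Hz. subst. reflexivity.
    - unfold Rsqr. assert (0 < b * b) by (apply Rsqr_pos_lt; auto). nra.
    - unfold Rsqr. assert (0 < a * a) by (apply Rsqr_pos_lt; auto). nra.
    - unfold Rsqr. assert (0 < a * a) by (apply Rsqr_pos_lt; auto). nra. }
  assert (Hmod : Cmod (a, b) = sqrt (a² + b²)).
  { unfold Cmod; simpl. rewrite !Rsqr_pow2. reflexivity. }
  rewrite Hmod.
  set (m := sqrt (a² + b²)).
  assert (Hm : 0 < m) by (apply sqrt_lt_R0; auto).
  assert (HE : RInt (fun t => RInt (fun r => integrand (a, b) Y t r) A B) (- PI) PI
             = RInt (fun t => RInt (fth a b Y t) A B) (- PI) PI).
  { apply RInt_ext. intros t _. apply RInt_ext. intros r _. apply integrand_eq; auto. }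
  rewrite HE. eapply Rle_trans; [apply outer_le; auto|]. fold m.
  set (l := ln (2 + Y)). set (mu := Rmax 1 (/ m)).
  set (L := ln (1 + 2 * (A * m) / / Y)).
  assert (Hmu1 : 1 <= mu) by apply Rmax_l.
  assert (Hmu2 : / m <= mu) by apply Rmax_r.
  assert (Hl2 : / 2 < l).
  { pose proof ln_lt_2. assert (ln 2 <= l) by (apply ln_mono; lra). lra. }
  assert (F1 : L2 Y <= l).
  { unfold L2, l. apply ln_mono.
    - assert (0 <= 2 * Y / PI) by (apply Rdiv_le_0_compat; lra). lra.
    - pose proof PI2_1. assert (2 * Y / PI <= Y).
      { apply Rmult_le_reg_r with PI; auto. unfold Rdiv. rewrite Rmult_assoc, Rinv_l by lra. nra. }
      lra. }
  assert (HL2 : 0 <= L2 Y) by (apply L2_nonneg; auto).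
  assert (F3 : L <= 2 * (A * m) + l).
  { unfold L, l. replace (2 * (A * m) / / Y) with (2 * (A * m) * Y) by (field; lra).
    assert (HAm : 0 < A * m) by nra.
    assert (ln (1 + 2 * (A * m) * Y) <= ln ((1 + 2 * (A * m)) * (2 + Y))).
    { apply ln_mono; nra. }
    rewrite ln_mult in H by nra. pose proof (ln_le_x (2 * (A * m)) ltac:(lra)). lra. }
  assert (HL : 0 <= L).
  { unfold L. rewrite <- ln_1. apply ln_mono; [lra|].
    assert (0 <= 2 * (A * m) / / Y) by (apply Rdiv_le_0_compat; [nra| apply Rinv_0_lt_compat; lra]). lra. }
  assert (B1 : 2 * PI * T1 A B Y <= 2 * PI * sqrt 2 * (3 * PI * (B - A) + 4 * B) * mu * l).
  { unfold T1.
    assert (PI * (B - A) * (1 + L2 Y) + 4 * B * L2 Y <= (3 * PI * (B - A) + 4 * B) * l).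
    { assert (0 < PI * (B - A)) by nra. nra. }
    assert (0 < PI * (B - A)) by (apply Rmult_lt_0_compat; lra).
    assert (0 <= (3 * PI * (B - A) + 4 * B) * l) by (apply Rmult_le_pos; lra).
    assert (sqrt 2 * (PI * (B - A) * (1 + L2 Y) + 4 * B * L2 Y) <= sqrt 2 * ((3 * PI * (B - A) + 4 * B) * l))
      by (apply Rmult_le_compat_l; lra).
    assert (sqrt 2 * ((3 * PI * (B - A) + 4 * B) * l) <= sqrt 2 * ((3 * PI * (B - A) + 4 * B) * l) * mu).
    { assert (0 <= sqrt 2 * ((3 * PI * (B - A) + 4 * B) * l)) by (apply Rmult_le_pos; lra). nra. }
    replace (2 * PI * sqrt 2 * (3 * PI * (B - A) + 4 * B) * mu * l) with
      (2 * PI * (sqrt 2 * ((3 * PI * (B - A) + 4 * B) * l) * mu)) by ring.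
    apply Rmult_le_compat_l; lra. }
  assert (B2 : (2 * PI + (2 * PI + 2) * L) / (A * m) <= ((6 * PI + 2) / A + 4 * (2 * PI + 2)) * mu * l).
  { assert (E : (2 * PI + (2 * PI + 2) * L) / (A * m) <= (2 * PI + (2 * PI + 2) * l) * (/ A * / m) + 2 * (2 * PI + 2)).
    { replace ((2 * PI + (2 * PI + 2) * l) * (/ A * / m) + 2 * (2 * PI + 2))
        with ((2 * PI + (2 * PI + 2) * (2 * (A * m) + l)) / (A * m)) by (field; lra).
      unfold Rdiv. apply Rmult_le_compat_r; [left; apply Rinv_0_lt_compat; nra|]. nra. }
    assert (E2 : (2 * PI + (2 * PI + 2) * l) <= (6 * PI + 2) * l) by nra.
    assert (E3 : / A * / m <= / A * mu) by (apply Rmult_le_compat_l; lra).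
    assert (E4 : (2 * PI + (2 * PI + 2) * l) * (/ A * / m) <= (6 * PI + 2) * l * (/ A * mu)).
    { apply Rmult_le_compat; try lra. apply Rmult_le_pos; left; [apply Rinv_0_lt_compat; auto| apply Rinv_0_lt_compat; auto]. }
    assert (E5 : 2 * (2 * PI + 2) <= 4 * (2 * PI + 2) * mu * l).
    { assert (1 <= mu * (2 * l)) by nra. nra. }
    unfold Rdiv. nra. }
  assert (Hc : 0 <= (B - A) * sqrt 2) by (apply Rmult_le_pos; lra).
  assert (B3 : (B - A) * sqrt 2 * ((2 * PI + (2 * PI + 2) * L) / (A * m))
              <= (B - A) * sqrt 2 * (((6 * PI + 2) / A + 4 * (2 * PI + 2)) * mu * l))
    by (apply Rmult_le_compat_l; auto).
  unfold K. lra.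
Qed.
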